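(* At any time during the execution of DASH (described in the context) on an initially connected graph with $n$ nodes, every surviving node $v$ satisfies $\mathrm{rem}(v)\le n$.
   Context: Model: a network is an undirected graph, initially a connected graph $G_0$ on $n$ nodes. In each round an adversary deletes one surviving node $v$ with its incident edges, and then DASH adds edges. $G$ is the current network; $E'$ is the set of healing edges added so far whose endpoints both survive; $G'=(V(G),E')$. $N(u,G)$, $N(u,G')$ are neighbor sets in $G$, $G'$; $\delta(u)=\deg_G(u)-\deg_{G_0}(u)$. DASH: initially every node receives an ID drawn independently and uniformly from $[0,1]$ (its initial ID). When $v$ is deleted (quantities evaluated just before the deletion): partition the nodes of $N(v,G)$ whose current ID differs from that of $v$ into classes of equal current ID; $UN(v,G)$ consists of one node per class, the one with lowest initial ID. Let $S=UN(v,G)\cup N(v,G')$. Order $S$ by increasing $\delta$ and place it in this order into a complete binary tree with $|S|$ positions, filled level by level from the top and left to right; add to the network and to $E'$ the edge between each node of $S$ and the node at its parent position. Then all nodes of the component of $G'$ containing $S$ set their ID to the minimum current ID in $S$. Weights: every node $u$ has weight $w(u)$, initially $1$; when a node $v$ is deleted, $w(v)$ is added to the weight of an arbitrarily chosen node of $N(v,G')$. For a subgraph $H$, $W(H)$ is the sum of the weights of its vertices. For distinct surviving nodes $x,y$, $T(x,y)$ is the connected component of $G'-y$ containing $x$. Define $\mathrm{rem}(v)=\sum_{u\in N(v,G')}W(T(u,v))-\max_{u\in N(v,G')}W(T(u,v))+w(v)$ (the maximum over the empty set being $0$). *)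

(* Defs.v *)
From HB Require Import structures.
From mathcomp Require Import all_boot all_order all_algebra.
From mathcomp Require Import reals.
Set Implicit Arguments. Unset Strict Implicit. Unset Printing Implicit Defensive.
Import Order.TTheory GRing.Theory Num.Theory.

Section DASH.
Variables (R : realType) (n : nat).
Local Notation V := ('I_n).
Variable G0 : rel V.
Variable id0 : V -> R.

(* State of the execution. [gadj] = edges of the network G, [hadj] = E'
   (healing edges with both endpoints surviving), [cid] = current IDs,
   [wt] = weights. Edges are only meaningful between alive nodes. *)
Record state := MkState {
  alive : {set V};
  gadj : rel V;
  hadj : rel V;
  cid : V -> R;
  wt : V -> nat }.

Definition restrict (A : {set V}) (e : rel V) : rel V :=
  fun x y => [&& x \in A, y \in A & e x y].

Definition NG (s : state) (u : V) : {set V} := [set x in alive s | gadj s u x].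
Definition NH (s : state) (u : V) : {set V} := [set x in alive s | hadj s u x].

(* UN(v,G): one node per class of equal current ID (different from that of v)
   among N(v,G), namely the one with lowest initial ID. *)
Definition UN (s : state) (v : V) : {set V} :=
  [set u in NG s v | (cid s u != cid s v) &&
     [forall u' in NG s v, (cid s u' == cid s u) ==> (id0 u <= id0 u')%R]].

Definition Sset (s : state) (v : V) : {set V} := UN s v :|: NH s v.

Definition delta (s : state) (u : V) : int :=
  ((#|NG s u|)%:Z - (#|[set x | G0 u x]|)%:Z)%R.

(* edges of the complete binary tree on the sequence [ord]
   (0-indexed positions; the parent of position i > 0 is (i-1)/2) *)
Definition tree_edge (ord : seq V) : rel V := fun x y =>
  [exists i : 'I_(size ord), (0 < i)%N &&
     (((nth x ord i == x) && (nth x ord (i.-1)./2 == y)) ||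
      ((nth x ord i == y) && (nth x ord (i.-1)./2 == x)))].

(* The state after deleting [v], with healing tree built on [ord]
   (an ordering of S by increasing delta), [m] a node of S of minimal current
   ID, and [r] the node receiving the weight of v. *)
Definition next_state (s : state) (v : V) (ord : seq V) (m : V)
    (r : option V) : state :=
  let A' := alive s :\ v in
  let hadj' := restrict A' (fun x y => hadj s x y || tree_edge ord x y) in
  let comp := fun x => [exists u in Sset s v, connect hadj' u x] in
  MkState A'
    (restrict A' (fun x y => gadj s x y || tree_edge ord x y))
    hadj'
    (fun x => if (x \in A') && comp x then cid s m else cid s x)
    (fun x => match r with
              | Some r0 => if x == r0 then (wt s x + wt s v)%N else wt s x
              | None => wt s x end).

Definition init_state : state :=
  MkState [set: V] G0 (fun _ _ => false) id0 (fun _ => 1%N).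

Inductive reachable : state -> Prop :=
| reach_init : reachable init_state
| reach_step (s : state) (v : V) (ord : seq V) (m : V) (r : option V) :
    reachable s ->
    v \in alive s ->
    perm_eq ord (enum (Sset s v)) ->
    sorted (fun a b => delta s a <= delta s b)%R ord ->
    (Sset s v != set0 ->
       m \in Sset s v /\ (forall u, u \in Sset s v -> (cid s m <= cid s u)%R)) ->
    match r with
    | Some r0 => r0 \in NH s v
    | None => NH s v == set0
    end ->
    reachable (next_state s v ord m r).

Definition Tcomp (s : state) (x y : V) : {set V} :=
  [set z in alive s :\ y | connect (restrict (alive s :\ y) (hadj s)) x z].
Definition Wset (s : state) (T : {set V}) : nat := (\sum_(z in T) wt s z)%N.

Definition dash_rem (s : state) (v : V) : nat :=
  ((\sum_(u in NH s v) Wset s (Tcomp s u v))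
   - (\max_(u in NH s v) Wset s (Tcomp s u v)) + wt s v)%N.

End DASH.

(* Main.v *)
Require Import Defs.
From HB Require Import structures.
From mathcomp Require Import all_boot all_order all_algebra.
From mathcomp Require Import reals.
From mathcomp Require Import zify.
Set Implicit Arguments. Unset Strict Implicit. Unset Printing Implicit Defensive.
Import Order.TTheory GRing.Theory Num.Theory.

Definition gremE (T : finType) (e : rel T) (x y : T) : rel T :=
  fun a b => e a b && ~~ (((a == x) && (b == y)) || ((a == y) && (b == x))).
Definition gforest (T : finType) (e : rel T) :=
  forall x y, e x y -> ~~ connect (gremE e x y) x y.
Definition gaddE (T : finType) (e : rel T) (a b : T) : rel T :=
  fun c d => [|| e c d, (c == a) && (d == b) | (c == b) && (d == a)].

Lemma csym (T : finType) (e : rel T) : symmetric e ->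
  forall x y, connect e x y = connect e y x.
Proof. by move=> s x y; apply: sym_connect_sym. Qed.

Lemma connect_one_edge (T : finType) (e : rel T) a b x y : symmetric e ->
  connect (gaddE e a b) x y ->
  [|| connect e x y, connect e x a && connect e b y | connect e x b && connect e a y].
Proof.
move=> sym /connectP [p]; elim: p x => [|z p IH] x /=.
  by move=> _ ->; rewrite connect0.
move=> /andP[exz pz] ly; have := IH z pz ly.
have ct := @connect_trans T e.
case/or3P: exz => [exz|/andP[/eqP-> /eqP->]|/andP[/eqP-> /eqP->]].
- have cxz := connect1 exz.
  case/or3P => [c|/andP[c1 c2]|/andP[c1 c2]].
  + by rewrite (ct _ _ _ cxz c).
  + by rewrite (ct _ _ _ cxz c1) c2 orbT.
  + by rewrite (ct _ _ _ cxz c1) c2 !orbT.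
- case/or3P => [c|/andP[c1 c2]|/andP[c1 c2]].
  + by rewrite connect0 c orbT.
  + by rewrite csym in c1 => //; rewrite (ct _ _ _ c1 c2).
  + by rewrite c2.
- case/or3P => [c|/andP[c1 c2]|/andP[c1 c2]].
  + by rewrite connect0 c !orbT.
  + by rewrite c2.
  + by rewrite csym in c1 => //; rewrite (ct _ _ _ c1 c2).
Qed.

Lemma forest_sub (T : finType) (e e' : rel T) : subrel e' e -> gforest e -> gforest e'.
Proof.
move=> sub fe x y exy; have := fe x y (sub _ _ exy); apply: contra.
apply: connect_sub => a b /andP[e'ab nab]; apply: connect1.
by rewrite /gremE (sub _ _ e'ab) nab.
Qed.

Lemma forest_eq (T : finType) (e e' : rel T) : e =2 e' -> gforest e -> gforest e'.
Proof. by move=> E; apply: forest_sub => x y; rewrite E. Qed.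

Lemma forest_irr (T : finType) (e : rel T) : gforest e -> forall x, e x x = false.
Proof. by move=> fe x; apply/negP => /fe; rewrite connect0. Qed.

Lemma gremE_sym (T : finType) (e : rel T) x y : symmetric e -> symmetric (gremE e x y).
Proof.
move=> sym a b; rewrite /gremE sym.
by rewrite [(b == x) && _]andbC [(b == y) && _]andbC orbC.
Qed.

Lemma forest_add (T : finType) (e : rel T) a b : symmetric e -> gforest e ->
  ~~ connect e a b -> gforest (gaddE e a b).
Proof.
move=> sym fe nab x y.
have remsub : forall u w, subrel (gremE (gaddE e a b) u w) (gaddE (gremE e u w) a b).
  move=> u w c d /andP[/or3P[ecd|H|H] nn]; rewrite /gaddE /gremE.
  - by rewrite ecd nn.
  - by rewrite H orbT.
  - by rewrite H !orbT.
have subE : forall u w, subrel (gremE e u w) (connect e).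
  by move=> u w c d /andP[] H _; apply: connect1.
case/or3P => [exy|/andP[/eqP ex /eqP ey]|/andP[/eqP ex /eqP ey]].
- apply/negP => C.
  have C' : connect (gaddE (gremE e x y) a b) x y.
    by apply: connect_sub C => c d /remsub/connect1.
  case/or3P: (connect_one_edge (gremE_sym x y sym) C') => [c|/andP[c1 c2]|/andP[c1 c2]].
  + by move: (fe x y exy); rewrite c.
  + have c1' := connect_sub (@subE x y) c1; have c2' := connect_sub (@subE x y) c2.
    rewrite csym // in c1'; rewrite csym // in c2'.
    by rewrite (connect_trans c1' (connect_trans (connect1 exy) c2')) in nab.
  + have c1' := connect_sub (@subE x y) c1; have c2' := connect_sub (@subE x y) c2.
    have eyx : e y x by rewrite sym.
    by rewrite (connect_trans c2' (connect_trans (connect1 eyx) c1')) in nab.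
- subst x y; apply/negP => C; move: nab; apply/negP/negPn.
  apply: connect_sub C => c d /andP[/or3P[ecd|H|H] nn]; first exact: connect1.
  + by rewrite H in nn.
  + by rewrite H orbT in nn.
- subst x y; apply/negP => C; move: nab; apply/negP/negPn; rewrite csym //.
  apply: connect_sub C => c d /andP[/or3P[ecd|H|H] nn]; first exact: connect1.
  + by rewrite H orbT in nn.
  + by rewrite H in nn.
Qed.

Lemma connect_restr (T : finType) (e e' : rel T) (P : pred T) :
  (forall c d, e c d -> ~~ P c -> e' c d && ~~ P d) ->
  forall x y, ~~ P x -> connect e x y -> connect e' x y.
Proof.
move=> H x y Px /connectP[p]; elim: p x Px => [|z p IH] x Px /=.
  by move=> _ ->.
move=> /andP[exz pz] ly; case/andP: (H _ _ exz Px) => e'xz Pz.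
exact: connect_trans (connect1 e'xz) (IH z Pz pz ly).
Qed.

Definition TEi (T : eqType) (d : T) (ord : seq T) (i : nat) (x y : T) :=
  ((nth d ord i == x) && (nth d ord (i.-1)./2 == y)) ||
  ((nth d ord i == y) && (nth d ord (i.-1)./2 == x)).
Definition TE (T : eqType) (d : T) (ord : seq T) (x y : T) :=
  [exists i : 'I_(size ord), (0 < i) && TEi d ord i x y].

Lemma par_lt j : 0 < j -> (j.-1)./2 < j.
Proof. move=> j0; rewrite ltn_half_double -addnn; lia. Qed.

Lemma par_le j : (j.-1)./2 <= j.
Proof. by case: j => [|j] //; apply: ltnW; apply: par_lt. Qed.

Lemma TEi_def (T : eqType) (d d' : T) ord i x y : i < size ord ->
  TEi d ord i x y = TEi d' ord i x y.
Proof.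
move=> lt; have lt2 : (i.-1)./2 < size ord by apply: leq_ltn_trans (par_le i) lt.
by rewrite /TEi (set_nth_default d' d lt) (set_nth_default d' d lt2).
Qed.

Lemma TE_def (T : eqType) (d d' : T) ord x y : TE d ord x y = TE d' ord x y.
Proof. by apply: eq_existsb => i; rewrite (TEi_def d d' x y (ltn_ord i)). Qed.

Lemma TEi_sym (T : eqType) (d : T) ord i x y : TEi d ord i x y = TEi d ord i y x.
Proof. by rewrite /TEi orbC. Qed.

Lemma TE_sym (T : eqType) (d : T) ord : symmetric (TE d ord).
Proof. by move=> x y; apply: eq_existsb => i; rewrite TEi_sym. Qed.

Lemma TE_mem (T : eqType) (d : T) ord x y : TE d ord x y -> (x \in ord) && (y \in ord).
Proof.
case/existsP => i /andP[_ H].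
have lt := ltn_ord i; have lt2 : (i.-1)./2 < size ord by apply: leq_ltn_trans (par_le i) lt.
by case/orP: H => /andP[/eqP<- /eqP<-]; rewrite !mem_nth.
Qed.

Lemma forest_tree (T : finType) (e0 : rel T) (ord : seq T) (d : T) :
  symmetric e0 -> gforest e0 -> uniq ord ->
  (forall x y, x \in ord -> y \in ord -> x != y -> ~~ connect e0 x y) ->
  gforest (fun x y => e0 x y || TE d ord x y).
Proof.
move=> sym fe un D.
pose k := size ord; pose a := nth d ord.
pose H (j : nat) := fun x y => e0 x y || [exists i : 'I_k, [&& 0 < i, i < j & TEi d ord i x y]].
have Hsym : forall j, symmetric (H j).
  move=> j x y; rewrite /H sym; congr (_ || _); apply: eq_existsb => i.
  by rewrite TEi_sym.
have aD : forall i j, i < k -> j < k -> i != j -> ~~ connect e0 (a i) (a j).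
  by move=> i j ik jk ij; apply: D; rewrite ?mem_nth // nth_uniq.
suff : forall j, j <= k -> gforest (H j).
  move=> /(_ k (leqnn k)); apply: forest_eq => x y; rewrite /H; congr (_ || _).
  by apply: eq_existsb => i; rewrite ltn_ord.
elim => [_|j IH jk].
  apply: forest_eq fe => x y; rewrite /H.
  rewrite (_ : [exists i : 'I_k, _] = false) ?orbF //.
  by apply/existsP => -[i /and3P[_]]; rewrite ltn0.
have fj := IH (ltnW jk).
case: (posnP j) => [j0|j0].
  apply: forest_eq fj => x y; rewrite /H j0; congr (_ || _).
  by apply: eq_existsb => i; case: (nat_of_ord i) => [|[|i']].
pose p := (j.-1)./2.
have pj : p < j by apply: par_lt.
have HE : H j.+1 =2 gaddE (H j) (a j) (a p).
  move=> x y; rewrite /H /gaddE -orbA; congr (_ || _).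
  apply/existsP/idP.
  - case=> i /and3P[i0]; rewrite ltnS leq_eqVlt => /orP[/eqP ij|ij] Ei.
      move: Ei; rewrite /TEi ij -/p -/a.
      by case/orP => /andP[/eqP-> /eqP->]; rewrite !eqxx ?orbT.
    by apply/orP; left; apply/existsP; exists i; rewrite i0 ij.
  - case/or3P => [/existsP[i /and3P[i0 ij Ei]]|/andP[/eqP-> /eqP->]|/andP[/eqP-> /eqP->]].
    + by exists i; rewrite i0 Ei ltnS (ltnW ij).
    + by exists (Ordinal jk); rewrite j0 ltnSn /TEi /= eqxx eqxx.
    + by exists (Ordinal jk); rewrite j0 ltnSn /TEi /= eqxx eqxx orbT.
apply: (forest_eq (fun x y => esym (HE x y))); apply: forest_add => //.
pose K := fun z => [exists i : 'I_k, (i < j) && connect e0 (a i) z].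
have hr := @connect_restr T (H j) e0 K.
have pk : p < k by exact: ltn_trans pj jk.
apply/negP => C; move: (aD j p jk pk (negbT (gtn_eqF pj))); apply/negP/negPn.
apply: hr C.
- move=> c dd /orP[e0cd|/existsP[i /and3P[i0 ij Ei]]] Kc.
    rewrite e0cd /=; apply: contra Kc => /existsP[i /andP[ij cc]].
    apply/existsP; exists i; rewrite ij /=.
    by apply: connect_trans cc (connect1 _); rewrite sym.
  have pik : (i.-1)./2 < k by apply: leq_ltn_trans (par_le i) (ltn_ord i).
  have pij : (i.-1)./2 < j by apply: ltn_trans (par_lt i0) ij.
  move: Kc; case/orP: Ei => /andP[/eqP E1 /eqP E2].
  + by rewrite -E1; case/existsP; exists i; rewrite ij connect0.
  + by rewrite -E2; case/existsP; exists (Ordinal pik); rewrite pij connect0.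
- apply/existsP => -[i /andP[ij C]]; move: (aD i j (ltn_ord i) jk (negbT (ltn_eqF ij))).
  by rewrite C.
Qed.

Lemma connect_noedge (T : finType) (e : rel T) x y :
  (forall z, e x z = false) -> connect e x y -> x = y.
Proof. by move=> H /connectP[[|z p]] /=; [move=> _ ->|rewrite H]. Qed.

Lemma restrict_sym n (A : {set 'I_n}) e : symmetric e -> symmetric (restrict A e).
Proof. by move=> sym x y; rewrite /restrict sym andbCA. Qed.

Lemma restrict_sub n (A : {set 'I_n}) e : subrel (restrict A e) e.
Proof. by move=> x y /and3P[]. Qed.

Lemma no_cycle n (A : {set 'I_n}) e v u1 u2 : symmetric e -> gforest e ->
  e v u1 -> e v u2 -> u1 != u2 -> ~~ connect (restrict (A :\ v) e) u1 u2.
Proof.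
move=> sym fe e1 e2 neq; apply/negP => C.
have vu1 : v != u1 by apply/eqP => E; move: e1; rewrite -E forest_irr.
rewrite (csym (@restrict_sym _ (A :\ v) _ sym)) in C.
have C2 : connect (gremE e v u1) u2 u1.
  apply: connect_sub C => c d /and3P[cA dA ecd]; apply: connect1.
  move: cA dA; rewrite !inE => /andP[cv _] /andP[dv _].
  by rewrite /gremE ecd (negbTE cv) (negbTE dv) /= andbF.
have e2' : gremE e v u1 v u2 by rewrite /gremE e2 eqxx eq_sym (negbTE neq) (negbTE vu1).
by move: (fe v u1 e1); rewrite (connect_trans (connect1 e2') C2).
Qed.

Definition Inv (R : realType) n (s : state R n) :=
  [/\ symmetric (hadj s), gforest (hadj s),
      (forall x y, connect (hadj s) x y -> cid s x = cid s y) &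
      (\sum_(x in alive s) wt s x <= n)%N].

Lemma distinctS (R : realType) n (id0 : 'I_n -> R) (s : state R n) v :
  injective id0 -> Inv s ->
  forall x y, x \in Sset id0 s v -> y \in Sset id0 s v -> x != y ->
  ~~ connect (restrict (alive s :\ v) (hadj s)) x y.
Proof.
move=> inj [sym fe cidI _].
have toH : forall x y, connect (restrict (alive s :\ v) (hadj s)) x y ->
    cid s x = cid s y.
  by move=> x y C; apply: cidI; apply: connect_sub C => c d /restrict_sub/connect1.
have NHc : forall y, y \in NH s v -> cid s v = cid s y.
  by move=> y; rewrite /NH inE => /andP[_ h]; apply: cidI; apply: connect1.
move=> x y; rewrite /Sset !in_setU.
case/orP => [xU|xN]; case/orP => [yU|yN] neq; apply/negP => C.
- have cxy := toH _ _ C.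
  move: xU yU; rewrite /UN !inE => /and3P[xNG _ /forall_inP Hx] /and3P[yNG _ /forall_inP Hy].
  have yN' : y \in NG s v by rewrite /NG inE.
  have xN' : x \in NG s v by rewrite /NG inE.
  have l1 := implyP (Hx y yN'); have l2 := implyP (Hy x xN').
  rewrite cxy eqxx in l1; rewrite cxy eqxx in l2.
  have /inj E : id0 x = id0 y by apply: le_anti; rewrite (l1 isT) (l2 isT).
  by rewrite E eqxx in neq.
- have cxy := toH _ _ C; move: xU; rewrite inE => /and3P[_ ncv _].
  by rewrite cxy -(NHc _ yN) eqxx in ncv.
- have cxy := toH _ _ C; move: yU; rewrite inE => /and3P[_ ncv _].
  by rewrite -cxy -(NHc _ xN) eqxx in ncv.
- move: xN yN; rewrite !inE => /andP[_ h1] /andP[_ h2].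
  by move: (no_cycle (alive s) sym fe h1 h2 neq); rewrite C.
Qed.

Lemma rem_bound (R : realType) n (s : state R n) v :
  Inv s -> v \in alive s -> (dash_rem s v <= n)%N.
Proof.
case=> sym fe _ wsum vA; rewrite /dash_rem.
apply: leq_trans (leq_add (leq_subr _ _) (leqnn _)) _.
apply: leq_trans wsum; rewrite (big_setD1 v vA) addnC leq_add2l /Wset.
rewrite (eq_bigr (fun u => \sum_z (if z \in Tcomp s u v then wt s z else 0%N)));
  last by move=> u _; rewrite big_mkcond.
rewrite exchange_big /= [X in (_ <= X)%N]big_mkcond /=; apply: leq_sum => z _.
case: (pickP (fun u => (u \in NH s v) && (z \in Tcomp s u v))) => [u0 /andP[u0N zT]|none].
- have zA : z \in alive s :\ v by move: zT; rewrite inE => /andP[].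
  rewrite zA (bigD1 u0) //= zT big1 ?addn0 // => u /andP[uN uu0].
  case: ifP => // zTu; exfalso.
  move: zT zTu; rewrite !inE => /andP[_ c0] /andP[_ c1].
  move: u0N uN; rewrite /NH !inE => /andP[_ h0] /andP[_ h1].
  have := no_cycle (alive s) sym fe h1 h0 uu0.
  by rewrite (connect_trans c1 _) // (csym (@restrict_sym _ (alive s :\ v) _ sym)).
- rewrite big1 //= => u uN; by have := none u; rewrite uN /= => ->.
Qed.

Lemma Inv_init (R : realType) n (G0 : rel 'I_n) (id0 : 'I_n -> R) :
  Inv (init_state G0 id0).
Proof.
split => //=.
all: try (by move=> x y /connect_noedge ->).
all: try (by rewrite sum_nat_const cardsT card_ord muln1).
Qed.

Lemma Inv_step (R : realType) n (id0 : 'I_n -> R) (s : state R n) v ord m r :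
  injective id0 -> Inv s -> v \in alive s -> perm_eq ord (enum (Sset id0 s v)) ->
  match r with Some r0 => r0 \in NH s v | None => NH s v == set0 end ->
  Inv (next_state id0 s v ord m r).
Proof.
move=> inj I vA pe Hr.
have I' := I; case: I' => sym fe cidI wsum.
set S := Sset id0 s v.
set A' := alive s :\ v.
have memo : forall x, (x \in ord) = (x \in S) by move=> x; rewrite (perm_mem pe) mem_enum.
have SA : forall x, x \in S -> x \in A'.
  move=> x; rewrite /S /Sset in_setU /UN /NH !inE.
  case/orP => [/and3P[/andP[xa _] ncv _]|/andP[xa hvx]]; rewrite xa andbT.
  - by apply/eqP => E; rewrite E eqxx in ncv.
  - by apply/eqP => E; rewrite E forest_irr in hvx.
pose e0 := restrict A' (hadj s).
pose s' := next_state id0 s v ord m r.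
have hE0 : hadj s' = restrict A' (fun x y => hadj s x y || tree_edge ord x y) := erefl.
have hE : hadj s' =2 fun x y => e0 x y || TE v ord x y.
  move=> x y; rewrite hE0 /e0 /restrict.
  have -> : tree_edge ord x y = TE v ord x y by rewrite -(TE_def x v).
  case T: (TE v ord x y); last by rewrite !orbF.
  move/TE_mem: T; rewrite !memo => /andP[/SA -> /SA ->]; by rewrite !orbT.
have e0sym : symmetric e0 by apply: restrict_sym.
have hsym : symmetric (hadj s').
  by move=> x y; rewrite !hE e0sym TE_sym.
split => //.
- apply: (forest_eq (fun x y => esym (hE x y))); apply: forest_tree => //.
  + exact: forest_sub (@restrict_sub _ A' _) fe.
  + by rewrite (perm_uniq pe) enum_uniq.
  + by move=> x y; rewrite !memo => xS yS; exact: (@distinctS _ _ _ _ v inj I x y xS yS).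
- move=> x y C.
  pose P := fun z => [exists u in S, connect (hadj s') u z].
  have cE : forall z, cid s' z = if (z \in A') && P z then cid s m else cid s z
    := fun z => erefl.
  have noedge : forall z, z \notin A' -> forall w, hadj s' z w = false.
    by move=> z zA w; rewrite hE0 /restrict (negbTE zA).
  case: (boolP (x \in A')) => xA; last by rewrite (connect_noedge (noedge x xA) C).
  case: (boolP (y \in A')) => yA; last first.
    by rewrite csym // in C; rewrite (connect_noedge (noedge y yA) C).
  have Peq : P x = P y.
    apply/exists_inP/exists_inP => -[u uS cu]; exists u => //.
    + exact: connect_trans cu C.
    + by apply: connect_trans cu _; rewrite csym.
  rewrite !cE xA yA /= -Peq; case: ifP => // nc.
  apply: cidI; apply: (@connect_restr _ (hadj s') (hadj s) P) C; last by rewrite nc.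
  move=> c d hcd Pc; have hcd' := hcd.
  move: hcd; rewrite hE0 /restrict => /and3P[cA dA /orP[hs|te]].
  + rewrite hs /=; apply: contra Pc => /exists_inP[u uS cu]; apply/exists_inP.
    by exists u => //; apply: connect_trans cu (connect1 _); rewrite hsym.
  + have := @TE_mem _ c ord c d te; rewrite memo => /andP[cS _].
    by move: Pc; rewrite /P; case/exists_inP; exists c; rewrite ?connect0.
- rewrite /s'; clear hE0 hE hsym s'; case: r Hr => [r0 Hr0|_] /=.
  + have r0A : r0 \in A' by apply: SA; rewrite /S /Sset in_setU Hr0 orbT.
    apply: leq_trans wsum; rewrite (big_setD1 v vA) -/A'.
    rewrite (big_setD1 r0 r0A) /= (big_setD1 r0 r0A) /= eqxx.
    rewrite (eq_bigr (fun x => wt s x)); last first.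
      by move=> i; rewrite !inE => /andP[/negbTE -> _].
    by rewrite addnCA addnA leqnn.
  + apply: leq_trans wsum; rewrite (big_setD1 v vA) leq_addl //.
Qed.

Theorem lemma5 (R : realType) (n : nat) (G0 : rel 'I_n) (id0 : 'I_n -> R) :
  symmetric G0 -> irreflexive G0 -> (forall x y, connect G0 x y) ->
  injective id0 -> (forall x, (0 <= id0 x <= 1)%R) ->
  forall s : state R n, reachable G0 id0 s ->
  forall v : 'I_n, v \in alive s -> (dash_rem s v <= n)%N.
Proof.
move=> _ _ _ inj _ s Hs v vA; apply: rem_bound vA.
elim: Hs => [|s0 v0 ord m r _ IH v0A pe _ _ Hr]; first exact: Inv_init.
exact: Inv_step inj IH v0A pe Hr.
Qed.
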